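(* Let $\mathcal{S},\mathcal{A}$ be finite, $\gamma\in(0,1)$, $\alpha\in(0,1)$, $\zeta>0$, and consider an MDP with $(\tilde r(s,a),\tilde s')\sim P(\cdot,\cdot\mid s,a)$ and bounded rewards. For $V:\mathcal{S}\to\mathbb{R}$ define the operator $$(\mathcal{T}^*V)(s)=V(s)+\max_a 2\zeta\,\mathbb{E}_{r,s'}\big[(1-\alpha)\big(\delta(s,a,r,s')\big)_-+\alpha\big(\delta(s,a,r,s')\big)_+\big],\qquad \delta(s,a,r,s')=r+\gamma V(s')-V(s),$$ where $(r,s')\sim P(\cdot,\cdot\mid s,a)$. Then the optimal dynamic-expectile value function $V^*$ is the unique solution of $\mathcal{T}^*V=V$.
   Context: $(x)_-=\min(x,0)$, $(x)_+=\max(x,0)$. $\rho=\mathrm{Expectile}_\alpha$, where $\mathrm{Expectile}_\alpha[\tilde x]=\arg\min_y(1-\alpha)\mathbb{E}[(\tilde x-y)_-^2]+\alpha\mathbb{E}[(\tilde x-y)_+^2]$. The optimal action-value function $Q^*$ solves $Q^*(s,a)=\rho\big(\tilde r(s,a)+\gamma\max_{a'}Q^*(\tilde s',a')\big)$ ($\rho$ taken over the joint law of $(\tilde r(s,a),\tilde s')$), and $V^*(s)=\max_aQ^*(s,a)$, so that $V^*(s)=\max_a\rho(\tilde r(s,a)+\gamma V^*(\tilde s'))$. *)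

(* Defs.v *)
From HB Require Import structures.
From mathcomp Require Import all_boot all_order all_algebra.
From mathcomp Require Import all_classical all_reals all_analysis.
Set Implicit Arguments. Unset Strict Implicit. Unset Printing Implicit Defensive.
Import Order.TTheory GRing.Theory Num.Theory.
Local Open Scope ring_scope.
Local Open Scope classical_set_scope.

Section Defs.
Context {R : realType} {d : measure_display} {Omega : measurableType d}.
Context {S A : finType}.

(* maximum over the (finite, assumed nonempty) action set, as a real number *)
Definition max_act (f : A -> R) : R := fine (\big[Order.max/-oo%E]_(a : A) (f a)%:E)%E.

Definition negp (x : R) : R := Num.min x 0.
Definition posp (x : R) : R := Num.max x 0.

Definition expectile_loss (P : probability Omega R) (alpha : R)
  (X : Omega -> R) (y : R) : \bar R :=
  ((1 - alpha)%:E * \int[P]_w ((negp (X w - y)) ^+ 2)%:E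
   + alpha%:E * \int[P]_w ((posp (X w - y)) ^+ 2)%:E)%E.

Definition is_expectile (P : probability Omega R) (alpha : R)
  (X : Omega -> R) (y : R) : Prop :=
  forall z : R, (expectile_loss P alpha X y <= expectile_loss P alpha X z)%E.

(* The transition law: for each (s,a), the pair (r(s,a), s') is realized as
   (rew s a, next s a) on the probability space (Omega, P). *)
Definition is_optimal_Q (P : probability Omega R) (alpha gamma : R)
  (rew : S -> A -> Omega -> R) (next : S -> A -> Omega -> S)
  (Q : S -> A -> R) : Prop :=
  forall s a, is_expectile P alpha
    (fun w => rew s a w + gamma * max_act (Q (next s a w))) (Q s a).

Definition Tstar (P : probability Omega R) (alpha gamma zeta : R)
  (rew : S -> A -> Omega -> R) (next : S -> A -> Omega -> S)
  (V : S -> R) (s : S) : \bar R :=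
  ((V s)%:E + \big[Order.max/-oo%E]_(a : A)
     ((2 * zeta)%:E * \int[P]_w
        ((1 - alpha) * negp (rew s a w + gamma * V (next s a w) - V s)
         + alpha * posp (rew s a w + gamma * V (next s a w) - V s))%:E))%E.

End Defs.

(* Main.v *)
Require Import Defs.
From HB Require Import structures.
From mathcomp Require Import all_boot all_order all_algebra.
From mathcomp Require Import all_classical all_reals all_analysis.
From mathcomp Require Import lra.
Import Order.TTheory GRing.Theory Num.Theory.
Local Open Scope ring_scope.
Local Open Scope classical_set_scope.
Definition psi {R : realType} (alpha t : R) := (1 - alpha) * negp t + alpha * posp t.
Definition phi {R : realType} (alpha t : R) := (1 - alpha) * (negp t)^+2 + alpha * (posp t)^+2.

Lemma phi_ineq (R : realType) (alpha t h : R) : 0 < alpha < 1 ->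
  phi alpha (t - h) <= phi alpha t - 2 * h * psi alpha t + h ^+ 2.
Proof.
move=> /andP[a0 a1]; rewrite /phi /psi /negp /posp.
have [t0|t0] := leP t 0; have [th0|th0] := leP (t - h) 0.
- nra.
- have : 0 <= alpha * ((- t) * (t - 2 * h)) by apply: mulr_ge0; [lra|nra].
  have : 0 <= (1 - alpha) * (t - h) ^+ 2 by apply: mulr_ge0; [lra|nra].
  nra.
- have : 0 <= (1 - alpha) * (t * (2 * h - t)) by apply: mulr_ge0; [lra|nra].
  have : 0 <= alpha * (t - h) ^+ 2 by apply: mulr_ge0; [lra|nra].
  nra.
- nra.
Qed.

Lemma psi_mono (R : realType) (alpha u t : R) : 0 < alpha < 1 -> u <= t ->
  psi alpha u <= psi alpha t - alpha * (1 - alpha) * (t - u).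
Proof.
move=> /andP[a0 a1] ut; rewrite /psi /negp /posp.
have h1 : 0 <= (1 - alpha) * ((1 - alpha) * (t - u)) by rewrite !mulr_ge0 //; lra.
have h2 : 0 <= alpha * (alpha * (t - u)) by rewrite !mulr_ge0 //; lra.
have [t0|t0] := leP t 0; have [u0|u0] := leP u 0.
- nra.
- lra.
- have h3 : 0 <= alpha * (alpha * t) by rewrite !mulr_ge0 //; lra.
  have h4 : 0 <= (1 - alpha) * ((1 - alpha) * (- u)) by rewrite !mulr_ge0 //; lra.
  nra.
- nra.
Qed.

Definition good {R : realType} {d : measure_display} {Omega : measurableType d}
  (f : Omega -> R) := measurable_fun setT f /\ exists M, forall w, `|f w| <= M.

Definition Ex {R : realType} {d : measure_display} {Omega : measurableType d}
  (P : probability Omega R) (f : Omega -> R) : R := fine (\int[P]_w (f w)%:E)%E.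

Lemma good_int {R : realType} {d : measure_display} {Omega : measurableType d}
  (P : probability Omega R) {f : Omega -> R} : good f -> P.-integrable setT (EFin \o f).
Proof.
move=> [mf [M hM]]; apply: measurable_bounded_integrable => //.
  by apply: (le_lt_trans (probability_le1 P measurableT)); exact: ltry.
exists M; split; first by rewrite num_real.
move=> M' hM' x _ /=; apply: le_trans (hM x) _; exact: ltW.
Qed.

Lemma Efin {R : realType} {d : measure_display} {Omega : measurableType d}
  (P : probability Omega R) {f : Omega -> R} : good f ->
  (\int[P]_w (f w)%:E = (Ex P f)%:E)%E.
Proof.
move=> gf; rewrite /Ex fineK //.
apply: integrable_fin_num => //; exact: good_int.
Qed.

Lemma E_add {R : realType} {d : measure_display} {Omega : measurableType d}
  (P : probability Omega R) (f g : Omega -> R) : good f -> good g ->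
  Ex P (fun w => f w + g w) = Ex P f + Ex P g.
Proof.
move=> gf gg; rewrite /Ex.
under eq_integral do rewrite EFinD.
rewrite integralD //; [|exact: good_int..].
by rewrite (Efin P gf) (Efin P gg).
Qed.

Lemma E_scale {R : realType} {d : measure_display} {Omega : measurableType d}
  (P : probability Omega R) (c : R) (f : Omega -> R) : good f ->
  Ex P (fun w => c * f w) = c * Ex P f.
Proof.
move=> gf; rewrite /Ex.
under eq_integral do rewrite EFinM.
rewrite integralZl //; last exact: good_int.
by rewrite (Efin P gf).
Qed.

Lemma E_cst {R : realType} {d : measure_display} {Omega : measurableType d}
  (P : probability Omega R) (c : R) : Ex P (fun _ => c) = c.
Proof.
rewrite /Ex (integral_cst P measurableT c%:E).
have h1 := probability_setT P. rewrite [X in (_ * X)%E](_ : _ = 1%E) ?mule1 //.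
Qed.

Lemma E_le {R : realType} {d : measure_display} {Omega : measurableType d}
  (P : probability Omega R) (f g : Omega -> R) : good f -> good g ->
  (forall w, f w <= g w) -> Ex P f <= Ex P g.
Proof.
move=> gf gg fg; rewrite -lee_fin -(Efin P gf) -(Efin P gg).
apply: le_integral => //; [exact: good_int|exact: good_int|].
by move=> w _; rewrite lee_fin.
Qed.

Lemma good_cst {R : realType} {d : measure_display} {Omega : measurableType d}
  (c : R) : @good R d Omega (fun _ => c).
Proof. by split; [exact: measurable_cst|exists `|c|]. Qed.

Lemma good_add {R : realType} {d : measure_display} {Omega : measurableType d}
  {f g : Omega -> R} : good f -> good g -> good (fun w => f w + g w).
Proof.
move=> [mf [M hM]] [mg [N hN]]; split; first exact: measurable_realfun.measurable_funD.
exists (M + N) => w; apply: le_trans (ler_normD _ _) _; exact: lerD.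
Qed.

Lemma good_mul {R : realType} {d : measure_display} {Omega : measurableType d}
  {f g : Omega -> R} : good f -> good g -> good (fun w => f w * g w).
Proof.
move=> [mf [M hM]] [mg [N hN]]; split; first exact: measurable_realfun.measurable_funM.
exists (M * N) => w; rewrite normrM; apply: ler_pM => //.
Qed.

Lemma good_negp {R : realType} {d : measure_display} {Omega : measurableType d}
  {f : Omega -> R} : good f -> good (fun w => negp (f w)).
Proof.
move=> [mf [M hM]]; split.
  exact: (measurable_realfun.measurable_minr mf (measurable_cst (0:R))).
exists M => w; apply: le_trans (hM w); rewrite /negp.
have [h|h] := leP (f w) 0 => //; rewrite normr0 //.
Qed.

Lemma good_posp {R : realType} {d : measure_display} {Omega : measurableType d}
  {f : Omega -> R} : good f -> good (fun w => posp (f w)).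
Proof.
move=> [mf [M hM]]; split.
  exact: (measurable_realfun.measurable_maxr mf (measurable_cst (0:R))).
exists M => w; apply: le_trans (hM w); rewrite /posp.
have [h|h] := leP (f w) 0 => //; rewrite normr0 //.
Qed.

Lemma good_next {R : realType} {d : measure_display} {Omega : measurableType d}
  (S : finType) (Vf : S -> R) (nx : Omega -> S)
  (hnx : forall s', measurable [set w | nx w = s']) : good (fun w => Vf (nx w)).
Proof.
split.
  move=> _ B mB; rewrite setTI.
  have -> : (fun w => Vf (nx w)) @^-1` B =
    \bigcup_(s' in [set s' | B (Vf s')]) [set w | nx w = s'].
    apply/seteqP; split => w /=.
      by move=> Bw; exists (nx w).
    by move=> [s' /= Bs' hs]; rewrite hs.
  apply: fin_bigcup_measurable => //; exact: finite_finset.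
exists (\big[Num.max/0]_(s : S) `|Vf s|) => w.
exact: (le_bigmax 0 (fun s => `|Vf s|) (nx w)).
Qed.

Lemma good_psi {R : realType} {d : measure_display} {Omega : measurableType d}
  (alpha : R) {f : Omega -> R} : good f -> good (fun w => psi alpha (f w)).
Proof.
move=> gf; rewrite /psi; apply: good_add; apply: good_mul; try exact: good_cst.
exact: good_negp. exact: good_posp.
Qed.

Lemma good_phi {R : realType} {d : measure_display} {Omega : measurableType d}
  (alpha : R) {f : Omega -> R} : good f -> good (fun w => phi alpha (f w)).
Proof.
move=> gf; rewrite /phi; apply: good_add; apply: good_mul; try exact: good_cst.
  have gn := good_negp gf; exact: (good_mul gn gn).
have gn := good_posp gf; exact: (good_mul gn gn).
Qed.

Lemma foc {R : realType} {d : measure_display} {Omega : measurableType d}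
  (P : probability Omega R) (alpha : R) (X : Omega -> R) (y : R) :
  0 < alpha < 1 -> good X -> is_expectile P alpha X y ->
  Ex P (fun w => psi alpha (X w - y)) = 0.
Proof.
move=> ha gX hexp.
have gXz z : good (fun w => X w - z) by apply: good_add => //; exact: good_cst.
have Lr z : expectile_loss P alpha X z = (Ex P (fun w => phi alpha (X w - z)))%:E.
  have gn := good_negp (gXz z); have gp := good_posp (gXz z).
  have gn2 := good_mul gn gn; have gp2 := good_mul gp gp.
  rewrite /expectile_loss (Efin P gn2) (Efin P gp2) -!EFinM -EFinD; congr EFin.
  rewrite /phi E_add; last 2 first.
  - exact: (good_mul (good_cst _) gn2).
  - exact: (good_mul (good_cst _) gp2).
  by rewrite !E_scale.
set g := Ex P (fun w => psi alpha (X w - y)).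
have H := hexp (y + g); rewrite !Lr lee_fin in H.
have H2 : Ex P (fun w => phi alpha (X w - (y + g))) <=
    Ex P (fun w => phi alpha (X w - y) + ((- (2 * g)) * psi alpha (X w - y) + g ^+ 2)).
  apply: E_le.
  - exact: good_phi.
  - apply: good_add; first exact: good_phi.
    apply: good_add; last exact: good_cst.
    apply: good_mul; [exact: good_cst|exact: good_psi].
  move=> w; have := @phi_ineq _ alpha (X w - y) g ha.
  by rewrite opprD addrA; lra.
rewrite [X in _ <= X]E_add in H2; last 2 first.
- exact: good_phi.
- apply: good_add; last exact: good_cst.
  apply: good_mul; [exact: good_cst|exact: good_psi].
rewrite [X in _ <= _ + X]E_add in H2; last 2 first.
- apply: good_mul; [exact: good_cst|exact: good_psi].
- exact: good_cst.
rewrite [X in _ <= _ + (X + _)]E_scale in H2; last exact: good_psi.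
rewrite E_cst -/g in H2.
have hg : g ^+ 2 <= 0 by nra.
by apply/eqP; rewrite -sqrf_eq0 eq_le hg sqr_ge0.
Qed.

Lemma fin_argmax {R : realType} {I : finType} (i0 : I) (F : I -> R) :
  exists j, forall i, F i <= F j.
Proof.
case: (@arg_maxP _ _ I i0 xpredT F isT) => j _ H; exists j => i; exact: H.
Qed.

Lemma bigmax_fin {R : realType} {A : finType} (a0 : A) (F : A -> R) :
  (\big[Order.max/-oo%E]_(a : A) (F a)%:E)%E = (max_act F)%:E.
Proof.
rewrite /max_act.
have [a1 _ ->] := @eq_bigmax _ _ A (-oo)%E a0 xpredT (fun a => (F a)%:E) isT
  (fun i _ => leNye _).
by [].
Qed.

Lemma max_act_ge {R : realType} {A : finType} (a0 : A) (F : A -> R) (a : A) :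
  F a <= max_act F.
Proof.
rewrite -lee_fin -(bigmax_fin a0); exact: (le_bigmax _ (fun a => (F a)%:E) a).
Qed.

Lemma max_act_attained {R : realType} {A : finType} (a0 : A) (F : A -> R) :
  exists a, max_act F = F a.
Proof.
have [a1 _ h] := @eq_bigmax _ _ A (-oo)%E a0 xpredT (fun a => (F a)%:E) isT
  (fun i _ => leNye _).
by exists a1; rewrite /max_act h.
Qed.

Theorem lemma10 (R : realType) (d : measure_display) (Omega : measurableType d)
  (P : probability Omega R) (S A : finType) (a0 : A)
  (gamma alpha zeta : R)
  (hgamma : 0 < gamma < 1) (halpha : 0 < alpha < 1) (hzeta : 0 < zeta)
  (rew : S -> A -> Omega -> R) (next : S -> A -> Omega -> S)
  (hrew_meas : forall s a, measurable_fun setT (rew s a))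
  (hnext_meas : forall s a s', measurable [set w | next s a w = s'])
  (hbounded : exists M : R, forall s a w, `|rew s a w| <= M)
  (Qstar : S -> A -> R)
  (hQ : is_optimal_Q P alpha gamma rew next Qstar) :
  let Vstar := fun s => max_act (Qstar s) in
  (forall s, Tstar P alpha gamma zeta rew next Vstar s = (Vstar s)%:E) /\
  (forall V : S -> R,
     (forall s, Tstar P alpha gamma zeta rew next V s = (V s)%:E) -> V = Vstar).
Proof.
move=> Vs.
have [g0 g1] := andP hgamma.
have [al0 al1] := andP halpha.
have [Mr hMr] := hbounded.
have grew s a : good (rew s a).
  by split; [exact: hrew_meas | exists Mr => w; exact: hMr].
pose Xf (V : S -> R) s a w := rew s a w + gamma * V (next s a w).
have gX V s a : good (Xf V s a).
  apply: good_add; first exact: grew.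
  apply: good_mul; first exact: good_cst.
  exact: good_next.
pose gf V s a y := Ex P (fun w => psi alpha (Xf V s a w - y)).
have gpsi V s a y : good (fun w => psi alpha (Xf V s a w - y)).
  by apply: good_psi; apply: good_add; [exact: gX|exact: good_cst].
have Teq V s : Tstar P alpha gamma zeta rew next V s =
    (V s + max_act (fun a => 2 * zeta * gf V s a (V s)))%:E.
  rewrite /Tstar EFinD; congr (_ + _)%E.
  rewrite -(bigmax_fin a0); apply: eq_bigr => a _.
  by rewrite (Efin P (gpsi V s a (V s))) -EFinM.
have cmp V1 V2 s1 s2 a1 a2 y1 y2 k : 0 <= k ->
    (forall w, Xf V1 s1 a1 w - y1 <= Xf V2 s2 a2 w - y2 - k) ->
    gf V1 s1 a1 y1 <= gf V2 s2 a2 y2 - alpha * (1 - alpha) * k.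
  move=> k0 hk.
  have -> : gf V2 s2 a2 y2 - alpha * (1 - alpha) * k =
      Ex P (fun w => psi alpha (Xf V2 s2 a2 w - y2) + (- (alpha * (1 - alpha) * k))).
    rewrite E_add ?E_cst //; try exact: good_cst; exact: gpsi.
  rewrite /gf; apply: E_le; [exact: gpsi| apply: good_add; [exact: gpsi|exact: good_cst]|].
  move=> w.
  have hw := hk w.
  have hle : Xf V1 s1 a1 w - y1 <= Xf V2 s2 a2 w - y2 by lra.
  have := @psi_mono _ alpha _ _ halpha hle.
  have : 0 <= alpha * (1 - alpha) * (Xf V2 s2 a2 w - y2 - (Xf V1 s1 a1 w - y1) - k).
    by rewrite !mulr_ge0 //; lra.
  nra.
have fixVs : (forall s a, gf Vs s a (Vs s) <= 0) /\
             (forall s, exists a, gf Vs s a (Vs s) = 0).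
  have foc_Q s a : gf Vs s a (Qstar s a) = 0.
    exact: (foc P alpha _ _ halpha (gX Vs s a) (hQ s a)).
  split.
  - move=> s a.
    have := cmp Vs Vs s s a a (Vs s) (Qstar s a) 0 (lexx 0).
    rewrite foc_Q mulr0 subr0; apply => w; rewrite subr0.
    have := max_act_ge a0 (Qstar s) a; rewrite /Vs; lra.
  - move=> s; have [a ha] := max_act_attained a0 (Qstar s); exists a.
    have -> : Vs s = Qstar s a by exact: ha.
    exact: foc_Q.
have fix_T V : (forall s a, gf V s a (V s) <= 0) /\
               (forall s, exists a, gf V s a (V s) = 0) ->
    forall s, Tstar P alpha gamma zeta rew next V s = (V s)%:E.
  move=> [h1 h2] s; rewrite Teq; congr EFin.
  suff -> : max_act (fun a => 2 * zeta * gf V s a (V s)) = 0 by rewrite addr0.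
  have [a2 ha2] := h2 s.
  have ge := max_act_ge a0 (fun a => 2 * zeta * gf V s a (V s)) a2.
  have [a1 ha1] := max_act_attained a0 (fun a => 2 * zeta * gf V s a (V s)).
  rewrite ha1 /= in ge *; rewrite ha2 in ge.
  have hh := h1 s a1.
  apply/eqP; rewrite eq_le; apply/andP; split; nra.
have T_fix V : (forall s, Tstar P alpha gamma zeta rew next V s = (V s)%:E) ->
    (forall s a, gf V s a (V s) <= 0) /\
    (forall s, exists a, gf V s a (V s) = 0).
  move=> hT.
  have hm s : max_act (fun a => 2 * zeta * gf V s a (V s)) = 0.
    have := hT s; rewrite Teq => /(congr1 fine) /= h.
    by apply: (addrI (V s)); rewrite addr0.
  split.
  - move=> s a; have := max_act_ge a0 (fun a => 2 * zeta * gf V s a (V s)) a.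
    rewrite hm /= => h; nra.
  - move=> s; have [a ha] := max_act_attained a0 (fun a => 2 * zeta * gf V s a (V s)).
    exists a; rewrite hm /= in ha.
    apply/eqP; rewrite eq_le; apply/andP; split; nra.
have key V1 V2 : (forall s a, gf V1 s a (V1 s) <= 0) /\
                 (forall s, exists a, gf V1 s a (V1 s) = 0) ->
                 (forall s a, gf V2 s a (V2 s) <= 0) /\
                 (forall s, exists a, gf V2 s a (V2 s) = 0) ->
    forall s, V1 s <= V2 s.
  move=> [h11 h12] [h21 h22] s.
  have [s1 hs1] := fin_argmax s (fun i => V1 i - V2 i).
  have hsc := hs1 s; simpl in hsc.
  case: (leP (V1 s1 - V2 s1) 0) => hc; first lra.
  have [a ha] := h12 s1.
  have := cmp V1 V2 s1 s1 a a (V1 s1) (V2 s1) ((1 - gamma) * (V1 s1 - V2 s1)).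
  have k0 : 0 <= (1 - gamma) * (V1 s1 - V2 s1) by rewrite mulr_ge0 //; lra.
  move=> /(_ k0).
  have hpt : forall w, Xf V1 s1 a w - V1 s1 <=
      Xf V2 s1 a w - V2 s1 - (1 - gamma) * (V1 s1 - V2 s1).
    move=> w; rewrite /Xf.
    have := hs1 (next s1 a w); simpl => h.
    have : gamma * (V1 (next s1 a w) - V2 (next s1 a w)) <= gamma * (V1 s1 - V2 s1).
      by rewrite ler_wpM2l //; lra.
    nra.
  move=> /(_ hpt); rewrite ha.
  have hpos : 0 < alpha * (1 - alpha) * ((1 - gamma) * (V1 s1 - V2 s1)).
    by rewrite !mulr_gt0 //; lra.
  have := h21 s1 a; lra.
split; first exact: fix_T Vs fixVs.
move=> V hV; have fV := T_fix V hV.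
apply: funext => s; apply/eqP; rewrite eq_le.
by rewrite (key V Vs fV fixVs s) (key Vs V fixVs fV s).
Qed.
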